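(* Let $q\ge1$ and assume Hypothesis (H$_q$). Suppose moreover $|f'(u)|\le M$ for all $u\in[ma,b]$. Then for all $x\in[a,b]$ and $\theta>0$, $$\Big|\frac{(x-a)^\theta+(b-x)^\theta}{b-a}f(mx)-\frac{\Gamma(\theta+1)}{m^\theta(b-a)}\Big[J^\theta_{(mx)^-}f(ma)+J^\theta_{(mx)^+}f(mb)\Big]\Big|\le\frac{mM}{\theta+1}\Big(\frac{\alpha m+\theta+1}{\alpha+\theta+1}\Big)^{\frac1q}\frac{(x-a)^{\theta+1}+(b-x)^{\theta+1}}{b-a}.$$
   Context: Let $\Gamma$ denote Euler's Gamma function. For $\theta>0$ and $x\in[a,b]$: $J^\theta_{(mx)^-}f(ma)=\frac{1}{\Gamma(\theta)}\int_{ma}^{mx}(s-ma)^{\theta-1}f(s)\,ds$ and $J^\theta_{(mx)^+}f(mb)=\frac{1}{\Gamma(\theta)}\int_{mx}^{mb}(mb-s)^{\theta-1}f(s)\,ds$ (each equal to $0$ if its interval of integration is degenerate). $(\alpha,m)$-convexity: for $(\alpha,m)\in[0,1]\times(0,1]$ and an interval $K\subseteq[0,\infty)$, a function $g:K\to\mathbb{R}$ is $(\alpha,m)$-convex on $K$ if $g(tX+m(1-t)Y)\le t^\alpha g(X)+m(1-t^\alpha)g(Y)$ for all $X,Y\in K$ and $t\in[0,1]$ with $tX+m(1-t)Y\in K$ (convention $0^0=1$). Hypothesis (H$_q$): $I\subseteq[0,\infty)$ is an interval, $f:I\to\mathbb{R}$ is differentiable on the interior $I^\circ$, $m\in(0,1]$,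 $\alpha\in[0,1]$, $a<b$ with $ma,b\in I^\circ$, $f'$ is Lebesgue integrable on $[ma,mb]$, and $|f'|^q$ is $(\alpha,m)$-convex on $[ma,b]$. *)

(* Defs.v *)
From Stdlib Require Import Reals Lra ClassicalEpsilon.
Open Scope R_scope.

Definition rpow (t s : R) : R :=
  if Req_EM_T t 0 then (if Req_EM_T s 0 then 1 else 0) else Rpower t s.

Definition RInt_val (g : R -> R) (c d v : R) : Prop :=
  exists pr : Riemann_integrable g c d, RiemannInt pr = v.

Definition is_improper_int (g : R -> R) (a b L : R) : Prop :=
  forall eps, 0 < eps -> exists del, 0 < del /\
    forall c d, a < c < a + del -> b - del < d < b -> c <= d ->
      exists v, RInt_val g c d v /\ Rabs (v - L) < eps.

(* The integral value over (a,b) (chosen by epsilon; unique when a < b). *)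
Definition improper_int (g : R -> R) (a b : R) : R :=
  epsilon (inhabits 0) (is_improper_int g a b).

Definition is_Gamma (th G : R) : Prop :=
  forall eps, 0 < eps -> exists del, 0 < del /\
    forall c d, 0 < c < del -> / del < d ->
      exists v, RInt_val (fun t => Rpower t (th - 1) * exp (- t)) c d v
                /\ Rabs (v - G) < eps.

Definition Gamma (th : R) : R := epsilon (inhabits 0) (is_Gamma th).

Definition J_left (th m a x : R) (f : R -> R) : R :=
  if Rle_dec (m * x) (m * a) then 0
  else / Gamma th * improper_int (fun s => Rpower (s - m * a) (th - 1) * f s) (m * a) (m * x).

Definition J_right (th m x b : R) (f : R -> R) : R :=
  if Rle_dec (m * b) (m * x) then 0
  else / Gamma th * improper_int (fun s => Rpower (m * b - s) (th - 1) * f s) (m * x) (m * b).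

Definition nonneg_interval (I : R -> Prop) : Prop :=
  (forall x y z, I x -> I z -> x <= y <= z -> I y) /\ (forall x, I x -> 0 <= x).

Definition alpha_m_convex (alpha m lo hi : R) (g : R -> R) : Prop :=
  forall X Y t, lo <= X <= hi -> lo <= Y <= hi -> 0 <= t <= 1 ->
    lo <= t * X + m * (1 - t) * Y <= hi ->
    g (t * X + m * (1 - t) * Y) <= rpow t alpha * g X + m * (1 - rpow t alpha) * g Y.

(* Main.v *)
Require Import Defs.
From Stdlib Require Import Reals Lra ClassicalEpsilon FunctionalExtensionality.
From Coquelicot Require Import Coquelicot.
Open Scope R_scope.

Lemma Rpower_pos x y : 0 < Rpower x y.
Proof. unfold Rpower; apply exp_pos. Qed.

Lemma dpl_cont f x l : derivable_pt_lim f x l -> continuity_pt f x.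
Proof. intro H; apply derivable_continuous_pt; exists l; exact H. Qed.

Lemma dpl_ext f x l l' : derivable_pt_lim f x l -> l = l' -> derivable_pt_lim f x l'.
Proof. intros H ->; exact H. Qed.



Lemma rp_der e p s : p < s ->
  derivable_pt_lim (fun s => Rpower (s - p) e) s (e * Rpower (s - p) (e - 1)).
Proof.
  intro H.
  pose proof (derivable_pt_lim_comp (fun s => s - p) (fun y => Rpower y e) s 1 (e * Rpower (s - p) (e-1))) as H1.
  unfold comp in H1. eapply dpl_ext; [apply H1|ring].
  - apply dpl_ext with (1 - 0); [|ring].
    apply derivable_pt_lim_minus; [apply derivable_pt_lim_id|apply derivable_pt_lim_const].
  - apply derivable_pt_lim_power; lra.
Qed.

Lemma rp_der_neg e q r : r < q ->
  derivable_pt_lim (fun r => Rpower (q - r) e) r (- (e * Rpower (q - r) (e - 1))).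
Proof.
  intro H.
  pose proof (derivable_pt_lim_comp (fun r => q - r) (fun y => Rpower y e) r (-1) (e * Rpower (q - r) (e-1))) as H1.
  unfold comp in H1. eapply dpl_ext; [apply H1|ring].
  - apply dpl_ext with (0 - 1); [|ring].
    apply derivable_pt_lim_minus; [apply derivable_pt_lim_const|apply derivable_pt_lim_id].
  - apply derivable_pt_lim_power; lra.
Qed.

Lemma Rpower_plus1 y e : 0 < y -> Rpower y (e + 1) = Rpower y e * y.
Proof. intro H; rewrite Rpower_plus, Rpower_1; auto. Qed.

Lemma Rpower_lt_base a b c : 0 < c -> 0 < a -> a < b -> Rpower a c < Rpower b c.
Proof. intros; apply Rlt_Rpower_l; lra. Qed.

Lemma Rpower_le_base a b c : 0 <= c -> 0 < a -> a <= b -> Rpower a c <= Rpower b c.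
Proof. intros; apply Rle_Rpower_l; lra. Qed.

Lemma Rpower_inv_pow a th : 0 < th -> Rpower (Rpower a (/ th)) th = a \/ a <= 0.
Proof.
  intro H. destruct (Rle_or_lt a 0) as [h|h]; [right; auto|left].
  rewrite Rpower_mult. replace (/ th * th) with 1 by (field; lra). apply Rpower_1; auto.
Qed.

Lemma small_pow th eps : 0 < th -> 0 < eps -> exists del, 0 < del /\
  forall y, 0 < y < del -> Rpower y th < eps.
Proof.
  intros Hth He. exists (Rpower eps (/ th)). split; [apply Rpower_pos|].
  intros y Hy. destruct (Rpower_inv_pow eps th Hth) as [E|E]; [|lra].
  apply Rlt_le_trans with (Rpower (Rpower eps (/th)) th); [apply Rpower_lt_base; lra| rewrite E; lra].
Qed.

Lemma ln_le_sub1 y : 0 < y -> ln y <= y - 1.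
Proof. intro H. pose proof (exp_ineq1_le (ln y)) as H1. rewrite exp_ln in H1; lra. Qed.

Lemma exp_tangent x w : exp w * (1 + x - w) <= exp x.
Proof.
  replace x with (w + (x - w)) at 2 by ring. rewrite exp_plus.
  apply Rmult_le_compat_l; [left; apply exp_pos|]. pose proof (exp_ineq1_le (x - w)) as H1. lra.
Qed.

Lemma bern z a : 0 < z -> 0 <= a <= 1 -> Rpower z a <= 1 - a + a * z.
Proof.
  intros Hz Ha. unfold Rpower.
  pose proof (exp_tangent (ln z) (a * ln z)) as H1.
  pose proof (exp_tangent 0 (a * ln z)) as H2.
  rewrite exp_ln in H1 by auto. rewrite exp_0 in H2.
  pose proof (exp_pos (a * ln z)) as P.
  (* a*H1 + (1-a)*H2 *)
  assert (E : a * (exp (a * ln z) * (1 + ln z - a * ln z)) + (1 - a) * (exp (a * ln z) * (1 + 0 - a * ln z)) = exp (a * ln z)) by ring.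
  assert (a * (exp (a * ln z) * (1 + ln z - a * ln z)) <= a * z) by (apply Rmult_le_compat_l; lra).
  assert ((1 - a) * (exp (a * ln z) * (1 + 0 - a * ln z)) <= (1-a) * 1) by (apply Rmult_le_compat_l; lra).
  lra.
Qed.

Lemma tangent_pow y K a : 0 < y -> 0 < K -> 0 <= a <= 1 ->
  Rpower y a <= Rpower K a * (1 - a) + a * Rpower K (a - 1) * y.
Proof.
  intros Hy HK Ha.
  pose proof (bern (y / K) a ltac:(apply Rdiv_lt_0_compat; auto) Ha) as B.
  assert (E : Rpower y a = Rpower K a * Rpower (y / K) a).
  { rewrite Rpower_mult_distr; [|auto|apply Rdiv_lt_0_compat; auto]. f_equal. field; lra. }
  assert (E2 : Rpower K (a - 1) = Rpower K a / K).
  { unfold Rminus. rewrite Rpower_plus, Rpower_Ropp, Rpower_1; auto. }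
  rewrite E, E2. pose proof (Rpower_pos K a) as P.
  apply Rle_trans with (Rpower K a * (1 - a + a * (y / K))).
  - apply Rmult_le_compat_l; lra.
  - right; field; lra.
Qed.

Lemma ballR (x e y : R) : ball x e y <-> Rabs (y - x) < e. Proof. reflexivity. Qed.

Lemma cont_of f x : continuity_pt f x -> continuous f x.
Proof. intro H; apply (proj1 (continuity_pt_filterlim f x)); exact H. Qed.

Lemma exRInt_cont f a b : a <= b -> (forall z, a <= z <= b -> continuity_pt f z) -> ex_RInt f a b.
Proof.
  intros Hab H. apply (@ex_RInt_continuous R_CompleteNormedModule). intros z Hz. apply cont_of, H.
  rewrite Rmin_left, Rmax_right in Hz; auto.
Qed.

Lemma ftc F f a b : a <= b -> (forall t, a <= t <= b -> derivable_pt_lim F t (f t)) ->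
  (forall t, a <= t <= b -> continuity_pt f t) -> RInt f a b = F b - F a.
Proof.
  intros Hab HD HC. apply is_RInt_unique.
  apply (@is_RInt_derive R_CompleteNormedModule F f a b).
  - intros x Hx. rewrite Rmin_left, Rmax_right in Hx; auto. apply is_derive_Reals, HD; auto.
  - intros x Hx. rewrite Rmin_left, Rmax_right in Hx; auto. apply cont_of, HC; auto.
Qed.

Lemma RInt_bound h F F' a b : a <= b ->
  (forall t, a <= t <= b -> continuity_pt h t) ->
  (forall t, a <= t <= b -> derivable_pt_lim F t (F' t)) ->
  (forall t, a <= t <= b -> continuity_pt F' t) ->
  (forall t, a < t < b -> Rabs (h t) <= F' t) ->
  Rabs (RInt h a b) <= F b - F a.
Proof.
  intros Hab Hh HD HC Hle.
  apply Rle_trans with (RInt (fun t => Rabs (h t)) a b).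
  - apply abs_RInt_le; auto. apply exRInt_cont; auto.
  - rewrite <- (ftc F F' a b); auto. apply RInt_le; auto.
    + apply exRInt_cont; auto. intros z Hz. apply (continuity_pt_comp h Rabs z); [apply Hh; auto|apply Rcontinuity_abs].
    + apply exRInt_cont; auto.
Qed.

Lemma RInt_val_of g a b : a <= b -> (forall t, a <= t <= b -> continuity_pt g t) ->
  Defs.RInt_val g a b (RInt g a b).
Proof.
  intros Hab H. assert (E : ex_RInt g a b) by (apply exRInt_cont; auto).
  exists (ex_RInt_Reals_0 _ _ _ E). symmetry; apply RInt_Reals.
Qed.

Lemma Chasles3 g a b c : ex_RInt g a b -> ex_RInt g b c -> RInt g a c = RInt g a b + RInt g b c.
Proof. intros; symmetry; apply (RInt_Chasles g a b c); auto. Qed.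

Lemma lim_right_ex (P : R -> R) p :
  (forall eps, 0 < eps -> exists del, 0 < del /\
     forall c1 c2, p < c1 < p + del -> p < c2 < p + del -> Rabs (P c1 - P c2) < eps) ->
  exists l, forall eps, 0 < eps -> exists del, 0 < del /\
     forall c, p < c < p + del -> Rabs (P c - l) < eps.
Proof.
  intro HC.
  set (F := filtermap P (at_right p)).
  assert (PF : ProperFilter F) by (apply filtermap_proper_filter, at_right_proper_filter).
  assert (CF : cauchy F).
  { intro eps. destruct (HC eps (cond_pos eps)) as [del [Hd H]].
    exists (P (p + del / 2)). unfold F, filtermap, at_right, within, locally.
    exists (mkposreal del Hd). intros y Hy Hpy. apply ballR. rewrite ballR in Hy. simpl in Hy.
    apply H; split_Rabs; lra. }
  exists (lim F). intros eps He.
  pose proof (complete_cauchy F PF CF (mkposreal eps He)) as H.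
  unfold F, filtermap, at_right, within, locally in H. destruct H as [del H].
  exists del. split; [apply cond_pos|]. intros c Hc. apply ballR. apply H; [|lra].
  apply ballR. pose proof (cond_pos del). split_Rabs; lra.
Qed.

Lemma lim_infty_ex (P : R -> R) :
  (forall eps, 0 < eps -> exists N, forall d1 d2, N < d1 -> N < d2 -> Rabs (P d1 - P d2) < eps) ->
  exists l, forall eps, 0 < eps -> exists N, forall d, N < d -> Rabs (P d - l) < eps.
Proof.
  intro HC.
  destruct (lim_right_ex (fun z => P (/ z)) 0) as [l Hl].
  { intros eps He. destruct (HC eps He) as [N HN].
    exists (/ (Rabs N + 1)). split; [apply Rinv_0_lt_compat; pose proof (Rabs_pos N); lra|].
    intros c1 c2 H1 H2. apply HN.
    - apply Rlt_le_trans with (Rabs N + 1); [pose proof (Rle_abs N); lra|].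
      rewrite <- (Rinv_inv (Rabs N + 1)). apply Rinv_le_contravar; lra.
    - apply Rlt_le_trans with (Rabs N + 1); [pose proof (Rle_abs N); lra|].
      rewrite <- (Rinv_inv (Rabs N + 1)). apply Rinv_le_contravar; lra. }
  exists l. intros eps He. destruct (Hl eps He) as [del [Hd H]].
  exists (/ del). intros d Hd'. assert (0 < d).
  { apply Rlt_trans with (/ del); auto. apply Rinv_0_lt_compat; auto. }
  replace d with (/ / d) by (apply Rinv_inv). apply H. split.
  - apply Rinv_0_lt_compat; lra.
  - rewrite Rplus_0_l. rewrite <- (Rinv_inv del). apply Rinv_lt_contravar; auto.
    apply Rmult_lt_0_compat; auto. apply Rinv_0_lt_compat; auto.
Qed.

Lemma le_eps x y K : 0 <= K -> (forall eps, 0 < eps -> x <= y + eps * K) -> x <= y.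
Proof.
  intros HK H. destruct (Rle_or_lt x y) as [h|h]; auto.
  specialize (H ((x - y) / (2 * (K + 1)))).
  assert (0 < (x - y) / (2 * (K + 1))) by (apply Rdiv_lt_0_compat; lra).
  specialize (H H0).
  assert ((x - y) / (2 * (K + 1)) * K < x - y).
  { apply Rle_lt_trans with ((x - y) / (2 * (K + 1)) * (K + 1)).
    - apply Rmult_le_compat_l; lra.
    - replace ((x - y) / (2 * (K + 1)) * (K + 1)) with ((x - y) / 2) by (field; lra). lra. }
  lra.
Qed.

Lemma RInt_lin f1 f2 k a b : ex_RInt f1 a b -> ex_RInt f2 a b ->
  RInt (fun s => k * f1 s - f2 s) a b = k * RInt f1 a b - RInt f2 a b.
Proof.
  intros H1 H2.
  pose proof (RInt_minus (V:=R_CompleteNormedModule) (fun s => k * f1 s) f2 a b) as E.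
  pose proof (RInt_scal (V:=R_CompleteNormedModule) f1 a b k H1) as E2.
  simpl in E, E2. change (RInt (fun s => k * f1 s - f2 s) a b = k * RInt f1 a b - RInt f2 a b).
  unfold minus, plus, opp, scal in E, E2; simpl in E, E2. unfold mult in E2; simpl in E2.
  unfold Rminus. rewrite E; [|apply (ex_RInt_scal (V:=R_NormedModule) f1 a b k H1)|exact H2].
  rewrite E2. reflexivity.
Qed.

Lemma dRp k e p s : p < s ->
  derivable_pt_lim (fun s => k * Rpower (s - p) e) s (k * (e * Rpower (s - p) (e - 1))).
Proof. intro H. apply (derivable_pt_lim_scal (fun s => Rpower (s - p) e)). apply rp_der; auto. Qed.

Lemma dplus f g x l1 l2 : derivable_pt_lim f x l1 -> derivable_pt_lim g x l2 ->
  derivable_pt_lim (fun y => f y + g y) x (l1 + l2).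
Proof. intros; apply derivable_pt_lim_plus; auto. Qed.

Lemma dminus f g x l1 l2 : derivable_pt_lim f x l1 -> derivable_pt_lim g x l2 ->
  derivable_pt_lim (fun y => f y - g y) x (l1 - l2).
Proof. intros; apply derivable_pt_lim_minus; auto. Qed.

Lemma cont_w e p s : p < s -> continuity_pt (fun s => Rpower (s - p) e) s.
Proof. intro H. eapply dpl_cont. apply rp_der; auto. Qed.

Lemma Rp_split e p s : p < s -> Rpower (s - p) (e + 1) = Rpower (s - p) e * (s - p).
Proof. intro; apply Rpower_plus1; lra. Qed.

Lemma core f p u th A D be :
  p < u -> 0 < th -> 0 <= A -> 0 <= D -> 0 < be ->
  (forall s, p < s <= u -> continuity_pt f s) ->
  (forall s, p < s <= u -> Rabs (f u - f s) <= A * (u - s) + D * (Rpower (u - p) be - Rpower (s - p) be)) ->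
  exists Lv, is_improper_int (fun s => Rpower (s - p) (th - 1) * f s) p u Lv /\
   Rabs (f u * (Rpower (u - p) th / th) - Lv) <=
     A * Rpower (u - p) (th + 1) / (th * (th + 1)) + D * Rpower (u - p) (be + th) * (be / (th * (be + th))).
Proof.
  intros Hpu Hth HA HD Hbe Hfc Hfb.
  set (L0 := u - p).
  set (w := fun s => Rpower (s - p) (th - 1)).
  set (g := fun s => Rpower (s - p) (th - 1) * f s).
  assert (Hgc : forall s, p < s <= u -> continuity_pt g s).
  { intros s Hs. unfold g. apply continuity_pt_mult; [apply cont_w; lra|apply Hfc; auto]. }
  set (Bf := Rabs (f u) + A * L0 + D * Rpower L0 be).
  assert (HBf : forall s, p < s <= u -> Rabs (f s) <= Bf).
  { intros s Hs. pose proof (Hfb s Hs) as H1. pose proof (Rpower_pos (s - p) be).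
    assert (A * (u - s) <= A * L0) by (apply Rmult_le_compat_l; unfold L0; lra).
    assert (D * (Rpower (u - p) be - Rpower (s - p) be) <= D * Rpower L0 be)
      by (apply Rmult_le_compat_l; unfold L0; lra).
    unfold Bf. replace (f s) with (f u - (f u - f s)) by ring.
    pose proof (Rabs_triang (f u) (- (f u - f s))). rewrite Rabs_Ropp in H3.
    unfold Rminus at 1. lra. }
  assert (Bf0 : 0 <= Bf) by (pose proof (HBf u ltac:(lra)); pose proof (Rabs_pos (f u)); lra).
  assert (HW : forall c1 c2, p < c1 <= c2 -> RInt w c1 c2 = Rpower (c2 - p) th / th - Rpower (c1 - p) th / th).
  { intros c1 c2 Hc.
    assert (E := ftc (fun s => / th * Rpower (s - p) th) w c1 c2).
    rewrite E; [| lra | |].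
    + unfold Rdiv. rewrite (Rmult_comm (Rpower (c2 - p) th)), (Rmult_comm (Rpower (c1 - p) th)). reflexivity.
    + intros t Ht. eapply dpl_ext; [apply dRp; lra|]. unfold w. field; lra.
    + intros t Ht. apply cont_w; lra. }
  assert (HCb : forall c1 c2, p < c1 <= c2 -> c2 <= u ->
            Rabs (RInt g c1 c2) <= Bf / th * Rpower (c2 - p) th - Bf / th * Rpower (c1 - p) th).
  { intros c1 c2 Hc Hc2.
    apply (RInt_bound g (fun s => Bf / th * Rpower (s - p) th) (fun s => Bf * w s)); [lra| | | |].
    - intros t Ht; apply Hgc; lra.
    - intros t Ht. eapply dpl_ext; [apply dRp; lra|]. unfold w. field; lra.
    - intros t Ht. apply continuity_pt_mult; [apply continuity_pt_const; intros ? ?; auto|apply cont_w; lra].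
    - intros t Ht. unfold g, w. rewrite Rabs_mult, Rabs_pos_eq by (left; apply Rpower_pos).
      rewrite Rmult_comm. apply Rmult_le_compat_r; [left; apply Rpower_pos|]. apply HBf; lra. }
  assert (Hex : forall c1 c2, p < c1 <= c2 -> c2 <= u -> ex_RInt g c1 c2).
  { intros c1 c2 H1 H2. apply exRInt_cont; [lra|]. intros; apply Hgc; lra. }
  destruct (lim_right_ex (fun c => RInt g c u) p) as [l Hl].
  { intros eps He.
    destruct (small_pow th (eps * th / (Bf + 1)) Hth) as [d1 [Hd1 Hs]].
    { apply Rdiv_lt_0_compat; [apply Rmult_lt_0_compat|]; lra. }
    exists (Rmin d1 L0). split; [apply Rmin_pos; unfold L0; lra|].
    assert (K : forall c1 c2, p < c1 < p + Rmin d1 L0 -> p < c2 < p + Rmin d1 L0 -> c1 <= c2 ->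
               Rabs (RInt g c1 u - RInt g c2 u) < eps).
    { intros c1 c2 H1 H2 H12.
      pose proof (Rmin_l d1 L0). pose proof (Rmin_r d1 L0).
      rewrite (Chasles3 g c1 c2 u) by (apply Hex; unfold L0 in *; lra).
      replace (RInt g c1 c2 + RInt g c2 u - RInt g c2 u) with (RInt g c1 c2) by lra.
      eapply Rle_lt_trans; [apply HCb; unfold L0 in *; lra|].
      pose proof (Rpower_pos (c1 - p) th).
      assert (Rpower (c2 - p) th < eps * th / (Bf + 1)) by (apply Hs; lra).
      apply Rle_lt_trans with (Bf / th * (eps * th / (Bf + 1))).
      - assert (0 <= Bf / th) by (apply Rdiv_le_0_compat; lra).
        assert (Bf / th * Rpower (c1 - p) th >= 0) by (apply Rle_ge, Rmult_le_pos; lra).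
        assert (Bf / th * Rpower (c2 - p) th <= Bf / th * (eps * th / (Bf + 1))) by
          (apply Rmult_le_compat_l; lra).
        lra.
      - replace (Bf / th * (eps * th / (Bf + 1))) with (eps * (Bf / (Bf + 1))) by (field; lra).
        assert (Bf / (Bf + 1) < 1) by (apply (Rmult_lt_reg_r (Bf + 1)); [lra|]; field_simplify; lra).
        pose proof (Rmult_lt_compat_l eps _ _ He H5). lra. }
    intros c1 c2 H1 H2. destruct (Rle_or_lt c1 c2).
    - apply K; auto.
    - rewrite Rabs_minus_sym. apply K; auto; lra. }
  exists l. split.
  -
    intros eps He.
    destruct (Hl (eps / 2) ltac:(lra)) as [d1 [Hd1 H1]].
    set (y0 := p + L0 / 2).
    destruct (continuity_ab_maj (fun s => Rabs (g s)) y0 u) as [Mx [HMx HMx2]].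
    { unfold y0, L0; lra. }
    { intros c Hc. apply (continuity_pt_comp g Rabs c); [apply Hgc; unfold y0, L0 in Hc; lra|apply Rcontinuity_abs]. }
    set (Bg := Rabs (g Mx)).
    assert (0 <= Bg) by apply Rabs_pos.
    exists (Rmin d1 (Rmin (L0 / 2) (eps / (2 * (Bg + 1))))).
    pose proof (Rmin_l d1 (Rmin (L0 / 2) (eps / (2 * (Bg + 1))))).
    pose proof (Rmin_r d1 (Rmin (L0 / 2) (eps / (2 * (Bg + 1))))).
    pose proof (Rmin_l (L0 / 2) (eps / (2 * (Bg + 1)))).
    pose proof (Rmin_r (L0 / 2) (eps / (2 * (Bg + 1)))).
    assert (0 < eps / (2 * (Bg + 1))) by (apply Rdiv_lt_0_compat; lra).
    split. { apply Rmin_pos; auto. apply Rmin_pos; unfold L0; lra. }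
    intros c d Hc Hd Hcd.
    exists (RInt g c d). split.
    + apply RInt_val_of; auto. intros; apply Hgc; unfold L0 in *; lra.
    + assert (Hcu : Rabs (RInt g c u - l) < eps / 2) by (apply H1; lra).
      rewrite (Chasles3 g c d u) in Hcu by (apply Hex; unfold L0 in *; lra).
      assert (Hdu : Rabs (RInt g d u) <= (u - d) * Bg).
      { apply abs_RInt_le_const; [lra|apply Hex; unfold L0 in *; lra|].
        intros t Ht. apply HMx. unfold y0, L0 in *; lra. }
      assert ((u - d) * Bg <= eps / 2).
      { apply Rle_trans with (eps / (2 * (Bg + 1)) * Bg).
        - apply Rmult_le_compat_r; lra.
        - apply (Rmult_le_reg_r (2 * (Bg + 1))); [lra|]. field_simplify; [|lra]. 
          lra. }
      replace (RInt g c d - l) with ((RInt g c d + RInt g d u - l) - RInt g d u) by ring.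
      eapply Rle_lt_trans; [apply Rabs_triang|]. rewrite Rabs_Ropp. lra.
  -
    set (Lb := Rpower L0 be).
    set (Q := fun s => A * L0 / th * Rpower (s - p) th - A / (th + 1) * Rpower (s - p) (th + 1)
                     + D * Lb / th * Rpower (s - p) th - D / (be + th) * Rpower (s - p) (be + th)).
    set (qf := fun s => w s * (A * (u - s) + D * (Lb - Rpower (s - p) be))).
    assert (HQd : forall s, p < s -> derivable_pt_lim Q s (qf s)).
    { intros s Hs. unfold Q.
      eapply dpl_ext.
      { apply dminus; [apply dplus; [apply dminus; apply dRp; auto|apply dRp; auto]|apply dRp; auto]. }
      unfold qf, w.
      replace (th + 1 - 1) with ((th - 1) + 1) by ring.
      replace (be + th - 1) with ((th - 1) + be) by ring.
      rewrite Rp_split by auto. rewrite Rpower_plus. unfold L0. field. lra. }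
    assert (Hqc : forall s, p < s -> continuity_pt qf s).
    { intros s Hs. unfold qf. apply continuity_pt_mult; [apply cont_w; auto|].
      apply continuity_pt_plus.
      - apply continuity_pt_mult; [apply continuity_pt_const; intros ? ?; auto|].
        apply continuity_pt_minus; [apply continuity_pt_const; intros ? ?; auto|apply continuity_pt_id].
      - apply continuity_pt_mult; [apply continuity_pt_const; intros ? ?; auto|].
        apply continuity_pt_minus; [apply continuity_pt_const; intros ? ?; auto|apply cont_w; auto]. }
    assert (Hwc : forall c, p < c <= u -> ex_RInt w c u).
    { intros c Hc. apply exRInt_cont; [lra|]. intros; apply cont_w; lra. }
    assert (Hkey : forall c, p < c <= u -> Rabs (f u * RInt w c u - RInt g c u) <= Q u - Q c).
    { intros c Hc. rewrite <- RInt_lin by (try apply Hwc; try apply Hex; lra).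
      apply (RInt_bound _ Q qf); [lra| | | |].
      - intros t Ht. apply continuity_pt_minus.
        + apply continuity_pt_mult; [apply continuity_pt_const; intros ? ?; auto|apply cont_w; lra].
        + apply Hgc; lra.
      - intros t Ht. apply HQd; lra.
      - intros t Ht. apply Hqc; lra.
      - intros t Ht. unfold g, qf, w.
        replace (f u * Rpower (t - p) (th - 1) - Rpower (t - p) (th - 1) * f t)
          with (Rpower (t - p) (th - 1) * (f u - f t)) by ring.
        rewrite Rabs_mult, (Rabs_pos_eq (Rpower _ _)) by (left; apply Rpower_pos).
        apply Rmult_le_compat_l; [left; apply Rpower_pos|]. apply Hfb; lra. }
    assert (HQc : forall c, p < c <= u -> 0 <= Q c).
    { intros c Hc. unfold Q.
      rewrite Rp_split by lra.
      replace (be + th) with (th + be) by ring. rewrite Rpower_plus.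
      pose proof (Rpower_pos (c - p) th).
      assert (Rpower (c - p) be <= Lb) by (apply Rpower_le_base; unfold L0 in *; lra).
      assert (0 <= A * (L0 / th - (c - p) / (th + 1))).
      { apply Rmult_le_pos; auto.
        assert ((c - p) / (th + 1) <= L0 / (th + 1)) by (apply Rmult_le_compat_r; [left; apply Rinv_0_lt_compat; lra|unfold L0; lra]).
        assert (L0 / (th + 1) <= L0 / th).
        { apply Rmult_le_compat_l; [unfold L0; lra|]. apply Rinv_le_contravar; lra. }
        lra. }
      assert (0 <= D * (Lb / th - Rpower (c - p) be / (th + be))).
      { apply Rmult_le_pos; auto.
        assert (Rpower (c - p) be / (th + be) <= Lb / (th + be)) by (apply Rmult_le_compat_r; [left; apply Rinv_0_lt_compat; lra|lra]).
        assert (Lb / (th + be) <= Lb / th).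
        { apply Rmult_le_compat_l; [unfold Lb; left; apply Rpower_pos|]. apply Rinv_le_contravar; lra. }
        lra. }
      replace (A * L0 / th * Rpower (c - p) th - A / (th + 1) * (Rpower (c - p) th * (c - p)) +
               D * Lb / th * Rpower (c - p) th - D / (th + be) * (Rpower (c - p) th * Rpower (c - p) be))
        with (Rpower (c - p) th * (A * (L0 / th - (c - p) / (th + 1)) + D * (Lb / th - Rpower (c - p) be / (th + be))))
        by (field; lra).
      apply Rmult_le_pos; lra. }
    assert (HQu : Q u = A * Rpower L0 (th + 1) / (th * (th + 1)) + D * Rpower L0 (be + th) * (be / (th * (be + th)))).
    { unfold Q, Lb, L0. rewrite (Rp_split th p u) by lra.
      rewrite Rpower_plus. field. lra. }
    rewrite <- HQu.
    apply (le_eps _ _ (Rabs (f u) / th + 1)).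
    { pose proof (Rabs_pos (f u)). assert (0 <= Rabs (f u) / th) by (apply Rdiv_le_0_compat; lra). lra. }
    intros eps He.
    destruct (Hl eps He) as [d1 [Hd1 H1]].
    destruct (small_pow th eps Hth He) as [d2 [Hd2 H2]].
    set (c := p + Rmin (Rmin d1 d2) L0 / 2).
    assert (0 < Rmin (Rmin d1 d2) L0) by (apply Rmin_pos; [apply Rmin_pos|unfold L0]; lra).
    pose proof (Rmin_l (Rmin d1 d2) L0). pose proof (Rmin_r (Rmin d1 d2) L0).
    pose proof (Rmin_l d1 d2). pose proof (Rmin_r d1 d2).
    assert (Hc : p < c <= u) by (unfold c, L0 in *; lra).
    pose proof (Hkey c Hc) as K1. pose proof (HQc c Hc) as K2.
    assert (K3 : Rabs (RInt g c u - l) < eps) by (apply H1; unfold c; lra).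
    assert (K4 : Rpower (c - p) th < eps) by (apply H2; unfold c; lra).
    rewrite HW in K1 by lra. unfold L0 in *.
    replace (f u * (Rpower (u - p) th / th) - l) with
      (f u * (Rpower (c - p) th / th) + (f u * (Rpower (u - p) th / th - Rpower (c - p) th / th) - RInt g c u)
        + (RInt g c u - l)) by ring.
    eapply Rle_trans; [apply Rabs_triang|]. eapply Rle_trans; [apply Rplus_le_compat_r, Rabs_triang|].
    rewrite Rabs_mult. rewrite (Rabs_pos_eq (Rpower (c - p) th / th)) by (apply Rdiv_le_0_compat; [left; apply Rpower_pos|lra]).
    assert (Rabs (f u) * (Rpower (c - p) th / th) <= eps * (Rabs (f u) / th)).
    { replace (eps * (Rabs (f u) / th)) with (Rabs (f u) * (eps / th)) by (field; lra).
      apply Rmult_le_compat_l; [apply Rabs_pos|]. apply Rmult_le_compat_r; [left; apply Rinv_0_lt_compat; lra|lra]. }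
    lra.
Qed.

Lemma exp_mono x y : x <= y -> exp x <= exp y.
Proof. intro H; destruct H as [H|H]; [left; apply exp_increasing; auto|subst; lra]. Qed.

Lemma eq_eps x y : (forall eps, 0 < eps -> Rabs (x - y) < eps) -> x = y.
Proof.
  intro H. destruct (Req_dec x y) as [e|n]; auto.
  assert (0 < Rabs (x - y)) by (apply Rabs_pos_lt; lra).
  specialize (H _ H0). lra.
Qed.

Lemma exp_inv_bound y : 0 < y -> exp (- y) < / y.
Proof.
  intro H. rewrite exp_Ropp. apply Rinv_lt_contravar; [apply Rmult_lt_0_compat; auto; apply exp_pos|].
  pose proof (exp_ineq1_le y). lra.
Qed.

Lemma dexp_lin k t : derivable_pt_lim (fun s => exp (k * s)) t (k * exp (k * t)).
Proof.
  pose proof (derivable_pt_lim_comp (fun s => k * s) exp t k (exp (k * t))) as H.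
  unfold comp in H. eapply dpl_ext; [apply H|ring].
  - eapply dpl_ext; [apply (derivable_pt_lim_scal (fun s => s)), derivable_pt_lim_id|ring].
  - apply derivable_pt_lim_exp.
Qed.

Lemma dexp_neg t : derivable_pt_lim (fun s => exp (- s)) t (- exp (- t)).
Proof.
  pose proof (derivable_pt_lim_comp Ropp exp t (-1) (exp (- t))) as H.
  unfold comp in H. eapply dpl_ext; [apply H|ring].
  - eapply dpl_ext; [apply derivable_pt_lim_opp, derivable_pt_lim_id|ring].
  - apply derivable_pt_lim_exp.
Qed.

Definition Kc th := exp (th * (ln (2 * th) - 1)).

Lemma growth th t : 0 < th -> 0 < t -> Rpower t th * exp (- t) <= Kc th * exp (- t / 2).
Proof.
  intros Hth Ht. unfold Rpower, Kc. rewrite <- !exp_plus. apply exp_mono.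
  assert (E : ln t = ln (t / (2 * th)) + ln (2 * th)).
  { rewrite <- ln_mult; [f_equal; field; lra| |]; [apply Rdiv_lt_0_compat|]; lra. }
  pose proof (ln_le_sub1 (t / (2 * th)) ltac:(apply Rdiv_lt_0_compat; lra)).
  rewrite E.
  assert (th * ln (t / (2 * th)) <= th * (t / (2 * th) - 1)) by (apply Rmult_le_compat_l; lra).
  replace (th * (t / (2 * th) - 1)) with (t / 2 - th) in H0 by (field; lra).
  lra.
Qed.

Definition hG th t := Rpower t (th - 1) * exp (- t).

Lemma hG_cont th t : 0 < t -> continuity_pt (hG th) t.
Proof.
  intro H. unfold hG. apply continuity_pt_mult.
  - eapply dpl_cont. apply derivable_pt_lim_power; auto.
  - apply (continuity_pt_comp Ropp exp t); [apply continuity_pt_opp, continuity_pt_id|apply derivable_continuous_pt, derivable_pt_exp].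
Qed.

Lemma hG_pos th t : 0 < t -> 0 < hG th t.
Proof. intro; unfold hG; apply Rmult_lt_0_compat; [apply Rpower_pos|apply exp_pos]. Qed.

Lemma hG_ex th a b : 0 < a -> a <= b -> ex_RInt (hG th) a b.
Proof. intros; apply exRInt_cont; auto. intros; apply hG_cont; lra. Qed.

Lemma is_Gamma_hG th G : is_Gamma th G <-> forall eps, 0 < eps -> exists del, 0 < del /\
    forall c d, 0 < c < del -> / del < d ->
      exists v, Defs.RInt_val (hG th) c d v /\ Rabs (v - G) < eps.
Proof. reflexivity. Qed.

Lemma RInt_val_eq g c d v : Defs.RInt_val g c d v -> RInt g c d = v.
Proof. intros [pr E]. rewrite <- E. apply RInt_Reals. Qed.

Lemma Gamma_unique th G1 G2 : is_Gamma th G1 -> is_Gamma th G2 -> G1 = G2.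
Proof.
  intros H1 H2. apply eq_eps. intros eps He.
  destruct (H1 (eps / 2) ltac:(lra)) as [d1 [Hd1 K1]].
  destruct (H2 (eps / 2) ltac:(lra)) as [d2 [Hd2 K2]].
  set (dl := Rmin d1 d2). assert (0 < dl) by (apply Rmin_pos; auto).
  pose proof (Rmin_l d1 d2). pose proof (Rmin_r d1 d2).
  assert (/ d1 <= / dl) by (apply Rinv_le_contravar; auto).
  assert (/ d2 <= / dl) by (apply Rinv_le_contravar; auto).
  destruct (K1 (dl / 2) (/ dl + 1)) as [v1 [V1 E1]]; [unfold dl in *; lra|lra|].
  destruct (K2 (dl / 2) (/ dl + 1)) as [v2 [V2 E2]]; [unfold dl in *; lra|lra|].
  apply RInt_val_eq in V1. apply RInt_val_eq in V2. rewrite V1 in V2. subst v2.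
  replace (G1 - G2) with ((v1 - G2) - (v1 - G1)) by ring.
  eapply Rle_lt_trans; [apply Rabs_triang|]. rewrite Rabs_Ropp. lra.
Qed.

Lemma Gamma_exists th : 0 < th -> exists G, is_Gamma th G /\ 0 < G.
Proof.
  intro Hth.
  destruct (lim_right_ex (fun c => RInt (hG th) c 1) 0) as [l1 Hl1].
  { intros eps He.
    destruct (small_pow th (eps * th / 2) Hth) as [d1 [Hd1 Hs]]; [apply Rdiv_lt_0_compat; [apply Rmult_lt_0_compat|]; lra|].
    exists (Rmin d1 1). split; [apply Rmin_pos; lra|].
    pose proof (Rmin_l d1 1). pose proof (Rmin_r d1 1).
    assert (K : forall c1 c2, 0 < c1 < 0 + Rmin d1 1 -> 0 < c2 < 0 + Rmin d1 1 -> c1 <= c2 ->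
      Rabs (RInt (hG th) c1 1 - RInt (hG th) c2 1) < eps).
    { intros c1 c2 H1 H2 H12.
      rewrite (Chasles3 (hG th) c1 c2 1) by (apply hG_ex; lra).
      replace (RInt (hG th) c1 c2 + RInt (hG th) c2 1 - RInt (hG th) c2 1) with (RInt (hG th) c1 c2) by lra.
      eapply Rle_lt_trans.
      { apply (RInt_bound _ (fun s => / th * Rpower s th) (fun s => Rpower s (th - 1))); [lra| | | |].
        - intros; apply hG_cont; lra.
        - intros t Ht. eapply dpl_ext; [apply (derivable_pt_lim_scal (fun s => Rpower s th)), derivable_pt_lim_power; lra|]. field; lra.
        - intros t Ht. eapply dpl_cont. apply derivable_pt_lim_power; lra.
        - intros t Ht. unfold hG. rewrite Rabs_mult, !Rabs_pos_eq by (left; first [apply Rpower_pos|apply exp_pos]).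
          pose proof (Rpower_pos t (th - 1)).
          assert (exp (- t) <= 1) by (rewrite <- exp_0; apply exp_mono; lra).
          pose proof (Rmult_le_compat_l _ _ _ (Rlt_le _ _ H3) H4). lra. }
      pose proof (Rpower_pos c1 th).
      assert (Rpower c2 th < eps * th / 2) by (apply Hs; lra).
      assert (/ th * Rpower c2 th < eps / 2).
      { replace (eps / 2) with (/ th * (eps * th / 2)) by (field; lra).
        apply Rmult_lt_compat_l; [apply Rinv_0_lt_compat|]; lra. }
      assert (0 < / th * Rpower c1 th) by (apply Rmult_lt_0_compat; [apply Rinv_0_lt_compat|]; lra).
      lra. }
    intros c1 c2 H1 H2. destruct (Rle_or_lt c1 c2); [apply K; auto|rewrite Rabs_minus_sym; apply K; auto; lra]. }
  destruct (lim_infty_ex (fun d => RInt (hG th) 1 d)) as [l2 Hl2].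
  { intros eps He. exists (8 * Kc th / eps + 1).
    assert (0 < Kc th) by apply exp_pos.
    assert (0 < 8 * Kc th / eps) by (apply Rdiv_lt_0_compat; lra).
    assert (K : forall d1 d2, 8 * Kc th / eps + 1 < d1 -> d1 <= d2 ->
      Rabs (RInt (hG th) 1 d1 - RInt (hG th) 1 d2) < eps).
    { intros d1 d2 H1 H2.
      rewrite (Chasles3 (hG th) 1 d1 d2) by (apply hG_ex; lra).
      replace (RInt (hG th) 1 d1 - (RInt (hG th) 1 d1 + RInt (hG th) d1 d2)) with (- RInt (hG th) d1 d2) by lra.
      rewrite Rabs_Ropp.
      eapply Rle_lt_trans.
      { apply (RInt_bound _ (fun s => - (2 * Kc th) * exp (- / 2 * s)) (fun s => Kc th * exp (- / 2 * s))); [lra| | | |].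
        - intros; apply hG_cont; lra.
        - intros t Ht. eapply dpl_ext; [apply (derivable_pt_lim_scal (fun s => exp (- / 2 * s))), dexp_lin|field].
        - intros t Ht. apply continuity_pt_mult; [apply continuity_pt_const; intros ? ?; auto|].
          eapply dpl_cont; apply dexp_lin.
        - intros t Ht. unfold hG. rewrite Rabs_mult, !Rabs_pos_eq by (left; first [apply Rpower_pos|apply exp_pos]).
          replace (- / 2 * t) with (- t / 2) by field.
          eapply Rle_trans; [|apply growth; lra].
          apply Rmult_le_compat_r; [left; apply exp_pos|]. apply Rle_Rpower; lra. }
      assert (0 < d1) by lra.
      pose proof (exp_pos (- / 2 * d2)).
      pose proof (exp_inv_bound (d1 / 2) ltac:(lra)).
      replace (- (d1 / 2)) with (- / 2 * d1) in H5 by field.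
      assert (Kc th * exp (- / 2 * d1) < Kc th * / (d1 / 2)) by (apply Rmult_lt_compat_l; lra).
      assert (Kc th * / (d1 / 2) < eps / 2).
      { replace (Kc th * / (d1 / 2)) with (2 * Kc th / d1) by (field; lra).
        apply (Rmult_lt_reg_r d1); [lra|]. unfold Rdiv. rewrite Rmult_assoc, Rinv_l by lra.
        apply (Rmult_lt_reg_r (2 / eps)); [apply Rdiv_lt_0_compat; lra|].
        replace (eps * / 2 * d1 * (2 / eps)) with d1 by (field; lra).
        replace (2 * Kc th * 1 * (2 / eps)) with (4 * Kc th / eps) by (field; lra).
        assert (4 * Kc th / eps <= 8 * Kc th / eps) by (unfold Rdiv; apply Rmult_le_compat_r; [left; apply Rinv_0_lt_compat|]; lra).
        lra. }
      assert (0 < Kc th * exp (- / 2 * d2)) by (apply Rmult_lt_0_compat; lra).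
      lra. }
    intros d1 d2 H1 H2. destruct (Rle_or_lt d1 d2); [apply K; auto|rewrite Rabs_minus_sym; apply K; auto; lra]. }
  exists (l1 + l2). split.
  - apply is_Gamma_hG. intros eps He.
    destruct (Hl1 (eps / 2) ltac:(lra)) as [d1 [Hd1 K1]].
    destruct (Hl2 (eps / 2) ltac:(lra)) as [N K2].
    set (dl := Rmin (Rmin d1 1) (/ (Rabs N + 1))).
    assert (0 < / (Rabs N + 1)) by (apply Rinv_0_lt_compat; pose proof (Rabs_pos N); lra).
    assert (0 < dl) by (apply Rmin_pos; [apply Rmin_pos|]; lra).
    pose proof (Rmin_l (Rmin d1 1) (/ (Rabs N + 1))). pose proof (Rmin_r (Rmin d1 1) (/ (Rabs N + 1))).
    pose proof (Rmin_l d1 1). pose proof (Rmin_r d1 1).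
    exists dl. split; auto. intros c d Hc Hd.
    assert (/ / (Rabs N + 1) <= / dl) by (apply Rinv_le_contravar; auto).
    rewrite Rinv_inv in H5. pose proof (Rle_abs N).
    assert (1 <= / dl) by (pose proof (Rabs_pos N); lra).
    exists (RInt (hG th) c d). split.
    + apply RInt_val_of; [unfold dl in *; lra|]. intros; apply hG_cont; lra.
    + rewrite (Chasles3 (hG th) c 1 d) by (apply hG_ex; unfold dl in *; lra).
      assert (Rabs (RInt (hG th) c 1 - l1) < eps / 2) by (apply K1; unfold dl in *; lra).
      assert (Rabs (RInt (hG th) 1 d - l2) < eps / 2) by (apply K2; lra).
      replace (RInt (hG th) c 1 + RInt (hG th) 1 d - (l1 + l2)) with
        ((RInt (hG th) c 1 - l1) + (RInt (hG th) 1 d - l2)) by lra.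
      eapply Rle_lt_trans; [apply Rabs_triang|]. lra.
  - assert (L1 : 0 <= l1).
    { destruct (Rle_or_lt 0 l1) as [h|h]; auto.
      destruct (Hl1 (- l1) ltac:(lra)) as [d1 [Hd1 K1]].
      set (c := Rmin d1 1 / 2). pose proof (Rmin_l d1 1). pose proof (Rmin_r d1 1).
      assert (0 < Rmin d1 1) by (apply Rmin_pos; lra).
      assert (0 <= RInt (hG th) c 1).
      { apply RInt_ge_0; [unfold c; lra|apply hG_ex; unfold c; lra|]. intros; left; apply hG_pos; unfold c in *; lra. }
      specialize (K1 c ltac:(unfold c in *; lra)). apply Rabs_def2 in K1. lra. }
    assert (L2 : exp (- 2) / 2 <= l2).
    { destruct (Rle_or_lt (exp (- 2) / 2) l2) as [h|h]; auto.
      destruct (Hl2 (exp (- 2) / 2 - l2) ltac:(lra)) as [N K2].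
      set (d := Rmax N 2 + 1). pose proof (Rmax_l N 2). pose proof (Rmax_r N 2).
      assert (exp (- 2) / 2 <= RInt (hG th) 1 d).
      { rewrite (Chasles3 (hG th) 1 2 d) by (apply hG_ex; unfold d; lra).
        assert (0 <= RInt (hG th) 2 d).
        { apply RInt_ge_0; [unfold d; lra|apply hG_ex; unfold d; lra|]. intros; left; apply hG_pos; lra. }
        assert (exp (- 2) / 2 <= RInt (hG th) 1 2).
        { replace (exp (- 2) / 2) with (RInt (fun _ => exp (- 2) / 2) 1 2).
          2: { rewrite RInt_const. unfold scal; simpl; unfold mult; simpl. ring. }
          apply RInt_le; [lra|apply ex_RInt_const|apply hG_ex; lra|].
          intros t Ht. unfold hG.
          assert (/ 2 <= Rpower t (th - 1)).
          { apply Rle_trans with (Rpower t (Ropp 1)).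
            - rewrite Rpower_Ropp, Rpower_1 by lra. apply Rinv_le_contravar; lra.
            - apply Rle_Rpower; lra. }
          assert (exp (- 2) <= exp (- t)) by (apply exp_mono; lra).
          pose proof (exp_pos (- 2)).
          apply Rle_trans with (/ 2 * exp (- t)); [|apply Rmult_le_compat_r; [left; apply exp_pos|lra]].
          lra. }
        lra. }
      specialize (K2 d ltac:(unfold d; lra)). apply Rabs_def2 in K2. lra. }
    pose proof (exp_pos (- 2)). lra.
Qed.

Lemma Gamma_step th G : 0 < th -> is_Gamma th G -> is_Gamma (th + 1) (th * G).
Proof.
  intros Hth HG. apply is_Gamma_hG. intros eps He.
  destruct (HG (eps / (3 * th)) ltac:(apply Rdiv_lt_0_compat; lra)) as [dG [HdG KG]].
  destruct (small_pow th (eps / 3) Hth ltac:(lra)) as [d2 [Hd2 Hs]].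
  assert (HK : 0 < Kc th) by apply exp_pos.
  set (e3 := eps / (6 * Kc th + 1)).
  assert (0 < e3) by (apply Rdiv_lt_0_compat; lra).
  set (dl := Rmin (Rmin dG d2) (Rmin 1 e3)).
  assert (0 < dl) by (apply Rmin_pos; apply Rmin_pos; lra).
  pose proof (Rmin_l (Rmin dG d2) (Rmin 1 e3)). pose proof (Rmin_r (Rmin dG d2) (Rmin 1 e3)).
  pose proof (Rmin_l dG d2). pose proof (Rmin_r dG d2). pose proof (Rmin_l 1 e3). pose proof (Rmin_r 1 e3).
  fold dl in H1, H2.
  exists dl. split; auto. intros c d Hc Hd.
  assert (/ 1 <= / dl) by (apply Rinv_le_contravar; lra). rewrite Rinv_1 in H7.
  assert (/ dG <= / dl) by (apply Rinv_le_contravar; lra).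
  destruct (KG c d ltac:(lra) ltac:(lra)) as [vG [VG EG]]. apply RInt_val_eq in VG.
  exists (RInt (hG (th + 1)) c d). split.
  { apply RInt_val_of; [lra|]. intros; apply hG_cont; lra. }
  set (F2 := fun t => Rpower t th * exp (- t)).
  assert (ID : RInt (hG (th + 1)) c d = th * RInt (hG th) c d - (F2 d - F2 c)).
  { rewrite (RInt_ext (hG (th + 1)) (fun t => th * hG th t - (th * hG th t - hG (th + 1) t)))
      by (intros; lra).
    rewrite RInt_lin.
    2: apply hG_ex; lra.
    2: { apply exRInt_cont; [lra|]. intros z Hz. apply continuity_pt_minus.
         - apply continuity_pt_mult; [apply continuity_pt_const; intros ? ?; auto|apply hG_cont; lra].
         - apply hG_cont; lra. }
    f_equal. apply ftc; [lra| |].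
    - intros t Ht. unfold F2, hG.
      eapply dpl_ext.
      { apply (derivable_pt_lim_mult (fun t => Rpower t th) (fun t => exp (- t))).
        - apply derivable_pt_lim_power; lra.
        - apply dexp_neg. }
      replace (th + 1 - 1) with th by ring. ring.
    - intros t Ht. apply continuity_pt_minus.
      + apply continuity_pt_mult; [apply continuity_pt_const; intros ? ?; auto|apply hG_cont; lra].
      + apply hG_cont; lra. }
  change (RInt (hG th) c d = vG) in VG. rewrite ID, VG.
  assert (F2d : F2 d < eps / 3).
  { unfold F2. assert (0 < d) by lra. eapply Rle_lt_trans; [apply growth; auto|].
    pose proof (exp_inv_bound (d / 2) ltac:(lra)).
    replace (- (d / 2)) with (- d / 2) in H10 by field.
    apply Rlt_le_trans with (Kc th * / (d / 2)); [apply Rmult_lt_compat_l; auto|].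
    replace (Kc th * / (d / 2)) with (2 * Kc th * / d) by (field; lra).
    assert (/ d < dl).
    { rewrite <- (Rinv_inv dl). apply Rinv_lt_contravar; auto. apply Rmult_lt_0_compat; auto. apply Rinv_0_lt_compat; auto. }
    apply Rle_trans with (2 * Kc th * e3); [apply Rmult_le_compat_l; lra|].
    unfold e3. apply (Rmult_le_reg_r (6 * Kc th + 1)); [lra|]. field_simplify; lra. }
  assert (F2c : 0 <= F2 c <= eps / 3).
  { unfold F2. split; [left; apply Rmult_lt_0_compat; [apply Rpower_pos|apply exp_pos]|].
    assert (Q1 : Rpower c th < eps / 3) by (apply Hs; lra).
    assert (Q2 : exp (- c) <= 1) by (rewrite <- exp_0; apply exp_mono; lra).
    pose proof (Rpower_pos c th) as Q3.
    pose proof (Rmult_le_compat_l _ _ _ (Rlt_le _ _ Q3) Q2). lra. }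
  assert (F2d0 : 0 <= F2 d) by (left; apply Rmult_lt_0_compat; [apply Rpower_pos|apply exp_pos]).
  replace (th * vG - (F2 d - F2 c) - th * G) with (th * (vG - G) - (F2 d - F2 c)) by ring.
  eapply Rle_lt_trans; [apply Rabs_triang|]. rewrite Rabs_Ropp, Rabs_mult, Rabs_pos_eq by lra.
  assert (th * Rabs (vG - G) < eps / 3).
  { replace (eps / 3) with (th * (eps / (3 * th))) by (field; lra). apply Rmult_lt_compat_l; auto. }
  assert (Rabs (F2 d - F2 c) <= eps / 3) by (apply Rabs_le; lra).
  lra.
Qed.

Lemma Gamma_val th : 0 < th -> 0 < Gamma th /\ Gamma (th + 1) = th * Gamma th.
Proof.
  intro Hth. destruct (Gamma_exists th Hth) as [G [HG G0]].
  assert (E1 : Gamma th = G).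
  { apply (Gamma_unique th); auto. unfold Gamma. apply epsilon_spec. exists G; auto. }
  assert (E2 : Gamma (th + 1) = th * G).
  { apply (Gamma_unique (th + 1)); [|apply Gamma_step; auto].
    unfold Gamma. apply epsilon_spec. exists (th * G); apply Gamma_step; auto. }
  rewrite E1, E2. auto.
Qed.

Lemma improper_unique g a b L : a < b -> is_improper_int g a b L -> improper_int g a b = L.
Proof.
  intros Hab HL. assert (HL' : is_improper_int g a b (improper_int g a b)).
  { unfold improper_int. apply epsilon_spec. exists L; auto. }
  apply eq_eps. intros eps He.
  destruct (HL (eps / 2) ltac:(lra)) as [d1 [Hd1 K1]].
  destruct (HL' (eps / 2) ltac:(lra)) as [d2 [Hd2 K2]].
  set (dl := Rmin (Rmin d1 d2) ((b - a) / 2)).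
  assert (0 < dl) by (apply Rmin_pos; [apply Rmin_pos|]; lra).
  pose proof (Rmin_l (Rmin d1 d2) ((b - a) / 2)). pose proof (Rmin_r (Rmin d1 d2) ((b - a) / 2)).
  pose proof (Rmin_l d1 d2). pose proof (Rmin_r d1 d2). fold dl in H0, H1.
  destruct (K1 (a + dl / 2) (b - dl / 2)) as [v1 [V1 E1]]; try lra.
  destruct (K2 (a + dl / 2) (b - dl / 2)) as [v2 [V2 E2]]; try lra.
  apply RInt_val_eq in V1. apply RInt_val_eq in V2. rewrite V1 in V2. subst v2.
  replace (improper_int g a b - L) with ((v1 - L) - (v1 - improper_int g a b)) by ring.
  eapply Rle_lt_trans; [apply Rabs_triang|]. rewrite Rabs_Ropp. lra.
Qed.

Lemma reflect_improper g a b L :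
  is_improper_int (fun y => g (- y)) (- b) (- a) L -> is_improper_int g a b L.
Proof.
  intros H eps He. destruct (H eps He) as [del [Hd K]].
  exists del. split; auto. intros c d Hc Hd' Hcd.
  destruct (K (- d) (- c)) as [v [[pr Ev] Ev2]]; try lra.
  exists v. split; auto.
  assert (I1 : is_RInt (fun y => g (- y)) (- d) (- c) v).
  { rewrite <- Ev, <- RInt_Reals. apply (RInt_correct (V:=R_CompleteNormedModule)).
    apply ex_RInt_Reals_1; auto. }
  apply (is_RInt_comp_opp (V:=R_NormedModule)) in I1.
  apply (is_RInt_swap (V:=R_NormedModule)) in I1.
  apply (is_RInt_opp (V:=R_NormedModule)) in I1.
  assert (I2 : is_RInt g c d (opp (opp v))).
  { eapply (is_RInt_ext (V:=R_NormedModule)); [|exact I1]. intros z _. simpl.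
    unfold opp; simpl. rewrite !Ropp_involutive. reflexivity. }
  assert (E : ex_RInt g c d) by (eexists; exact I2).
  pose proof (is_RInt_unique (V:=R_CompleteNormedModule) _ _ _ _ I2) as Eq.
  simpl in Eq. unfold opp in Eq. simpl in Eq. rewrite Ropp_involutive in Eq.
  exists (ex_RInt_Reals_0 _ _ _ E). rewrite <- RInt_Reals. exact Eq.
Qed.

Lemma cmp (F F' P P' : R -> R) s u : s <= u ->
  (forall r, s <= r <= u -> derivable_pt_lim F r (F' r)) ->
  (forall r, s <= r <= u -> derivable_pt_lim P r (P' r)) ->
  (forall r, s <= r <= u -> Rabs (F' r) <= P' r) ->
  Rabs (F u - F s) <= P u - P s.
Proof.
  intros Hsu HF HP Hle. destruct Hsu as [Hsu|Hsu].
  2: { subst. rewrite Rminus_diag, Rabs_R0. lra. }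
  destruct (MVT_cor2 (fun r => F r - P r) (fun r => F' r - P' r) s u Hsu) as [c1 [E1 H1]].
  { intros c Hc. apply dminus; auto. }
  destruct (MVT_cor2 (fun r => F r + P r) (fun r => F' r + P' r) s u Hsu) as [c2 [E2 H2]].
  { intros c Hc. apply dplus; auto. }
  pose proof (Hle c1 ltac:(lra)). pose proof (Hle c2 ltac:(lra)).
  assert (- P' c1 <= F' c1 <= P' c1) by (revert H; split_Rabs; intros; lra).
  assert (- P' c2 <= F' c2 <= P' c2) by (revert H0; split_Rabs; intros; lra).
  assert ((F' c1 - P' c1) * (u - s) <= 0) by (apply Rmult_le_0_r; lra).
  assert (0 <= (F' c2 + P' c2) * (u - s)) by (apply Rmult_le_pos; lra).
  apply Rabs_le. lra.
Qed.

Lemma interior_mid (I : R -> Prop) lo hi r : nonneg_interval I -> interior I lo -> interior I hi ->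
  lo <= r <= hi -> interior I r.
Proof.
  intros [Hc _] [d1 H1] [d2 H2] Hr.
  exists (mkposreal _ (Rmin_pos _ _ (cond_pos d1) (cond_pos d2))).
  intros y Hy. unfold disc in *. simpl in Hy.
  pose proof (Rmin_l d1 d2). pose proof (Rmin_r d1 d2).
  pose proof (cond_pos d1). pose proof (cond_pos d2).
  assert (Ilo : I lo) by (apply H1; unfold disc; rewrite Rminus_diag, Rabs_R0; auto).
  assert (Ihi : I hi) by (apply H2; unfold disc; rewrite Rminus_diag, Rabs_R0; auto).
  destruct (Rlt_or_le y lo).
  - apply H1. unfold disc. apply Rabs_def1; split_Rabs; lra.
  - destruct (Rle_or_lt y hi).
    + apply (Hc lo y hi); auto.
    + apply H2. unfold disc. apply Rabs_def1; split_Rabs; lra.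
Qed.

Lemma rpow_pos_eq t s : 0 < t -> rpow t s = Rpower t s.
Proof. intro H. unfold rpow. destruct (Req_EM_T t 0); [lra|auto]. Qed.

Lemma rpow_zero s : s <> 0 -> rpow 0 s = 0.
Proof. intro H. unfold rpow. destruct (Req_EM_T 0 0); [|lra]. destruct (Req_EM_T s 0); [lra|auto]. Qed.

Lemma rpow_ge0 t s : 0 <= rpow t s.
Proof. unfold rpow. destruct (Req_EM_T t 0); [destruct (Req_EM_T s 0); lra|left; apply Rpower_pos]. Qed.

Lemma rpow_mono z M q : 0 < q -> 0 <= z <= M -> rpow z q <= rpow M q.
Proof.
  intros Hq Hz. destruct (Req_dec z 0).
  - subst. rewrite rpow_zero by lra. apply rpow_ge0.
  - rewrite !rpow_pos_eq by lra. apply Rpower_le_base; lra.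
Qed.

Lemma rpow_unit t al : 0 <= t <= 1 -> 0 <= al <= 1 -> 0 <= rpow t al <= 1.
Proof.
  intros Ht Ha. split; [apply rpow_ge0|]. destruct (Req_dec t 0).
  - subst. unfold rpow. destruct (Req_EM_T 0 0); [|lra]. destruct (Req_EM_T al 0); lra.
  - rewrite rpow_pos_eq by lra. unfold Rpower. rewrite <- exp_0. apply exp_mono.
    assert (ln t <= 0) by (rewrite <- ln_1; apply ln_le; lra).
    assert (0 <= al * - ln t) by (apply Rmult_le_pos; lra). lra.
Qed.

Lemma ptw z M q m ta K : 0 <= z -> 0 <= M -> 1 <= q -> 0 < m <= 1 -> 0 <= ta <= 1 -> 0 < K ->
  rpow z q <= rpow M q * (ta + m * (1 - ta)) ->
  z <= M * (Rpower K (1 / q) * (1 - 1 / q) + 1 / q * Rpower K (1 / q - 1) * m)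
       + M * (1 / q * Rpower K (1 / q - 1) * (1 - m)) * ta.
Proof.
  intros Hz HM Hq Hm Hta HK H.
  set (psi := m + (1 - m) * ta).
  assert (Hpsi : 0 < psi) by (unfold psi; assert (0 <= (1 - m) * ta) by (apply Rmult_le_pos; lra); lra).
  assert (Hq1 : 0 <= 1 / q <= 1).
  { split; [apply Rdiv_le_0_compat; lra|]. unfold Rdiv. rewrite Rmult_1_l.
    rewrite <- Rinv_1. apply Rinv_le_contravar; lra. }
  pose proof (tangent_pow psi K (1 / q) Hpsi HK Hq1) as T.
  assert (RHS : M * (Rpower K (1 / q) * (1 - 1 / q) + 1 / q * Rpower K (1 / q - 1) * m)
       + M * (1 / q * Rpower K (1 / q - 1) * (1 - m)) * ta
       = M * (Rpower K (1 / q) * (1 - 1 / q) + 1 / q * Rpower K (1 / q - 1) * psi)) by (unfold psi; ring).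
  rewrite RHS. clear RHS.
  apply Rle_trans with (M * Rpower psi (1 / q)); [|apply Rmult_le_compat_l; lra].
  destruct (Req_dec z 0) as [Z|Z].
  { subst. apply Rmult_le_pos; [lra|left; apply Rpower_pos]. }
  destruct (Req_dec M 0) as [MZ|MZ].
  { subst. rewrite rpow_zero in H by lra. rewrite rpow_pos_eq in H by lra.
    pose proof (Rpower_pos z q). lra. }
  rewrite !rpow_pos_eq in H by lra.
  (* z = (z^q)^(1/q) <= (M^q psi)^(1/q) = M psi^(1/q) *)
  replace (ta + m * (1 - ta)) with psi in H by (unfold psi; ring).
  assert (E1 : Rpower (Rpower z q) (1 / q) = z).
  { rewrite Rpower_mult. replace (q * (1 / q)) with 1 by (field; lra). apply Rpower_1; lra. }
  assert (E2 : Rpower (Rpower M q * psi) (1 / q) = M * Rpower psi (1 / q)).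
  { rewrite <- Rpower_mult_distr by (try apply Rpower_pos; lra).
    rewrite Rpower_mult. replace (q * (1 / q)) with 1 by (field; lra). rewrite Rpower_1; lra. }
  rewrite <- E1, <- E2. apply Rpower_le_base; [lra|apply Rpower_pos|auto].
Qed.

Lemma alg_side y m th a b Fu Lv al M K q Gm A C D :
  0 < y -> 0 < m -> 0 < th -> a < b -> 0 < Gm -> 0 <= al -> 1 <= q ->
  K = (al * m + th + 1) / (al + th + 1) ->
  A = M * (Rpower K (1/q) * (1 - 1/q) + 1/q * Rpower K (1/q - 1) * m) ->
  C = M * (1/q * Rpower K (1/q - 1) * (1 - m)) ->
  D = C * Rpower (m * y) (- al) / (al + 1) ->
  Rabs (Fu * (Rpower (m * y) th / th) - Lv) <=
    A * Rpower (m * y) (th + 1) / (th * (th + 1)) + D * Rpower (m * y) ((al + 1) + th) * ((al + 1) / (th * ((al + 1) + th))) ->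
  Rabs (Rpower y th / (b - a) * Fu - (th * Gm) / (Rpower m th * (b - a)) * (/ Gm * Lv))
   <= m * M / (th + 1) * Rpower K (1/q) * (Rpower y (th + 1) / (b - a)).
Proof.
  intros Hy Hm Hth Hab HG Hal Hq EK EA EC ED H.
  assert (HK : 0 < K).
  { rewrite EK. apply Rdiv_lt_0_compat; [|lra]. assert (0 <= al * m) by (apply Rmult_le_pos; lra). lra. }
  assert (E1 : Rpower (m * y) th = Rpower m th * Rpower y th) by (rewrite Rpower_mult_distr; auto).
  assert (E2 : Rpower (m * y) (th + 1) = Rpower m th * Rpower y th * (m * y)).
  { rewrite Rpower_plus1 by (apply Rmult_lt_0_compat; auto). rewrite E1. ring. }
  assert (E3 : Rpower (m * y) (- al) * Rpower (m * y) ((al + 1) + th) = Rpower (m * y) (th + 1)).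
  { rewrite <- Rpower_plus. f_equal. ring. }
  assert (E4 : Rpower y (th + 1) = Rpower y th * y) by (apply Rpower_plus1; auto).
  assert (E5 : Rpower K (1 / q - 1) = Rpower K (1 / q) / K).
  { unfold Rminus. rewrite Rpower_plus, Rpower_Ropp, Rpower_1; auto. }
  set (R1 := Rpower m th) in *. set (Y1 := Rpower y th) in *. set (KQ := Rpower K (1/q)) in *.
  assert (0 < R1) by apply Rpower_pos. assert (0 < Y1) by apply Rpower_pos. assert (0 < KQ) by apply Rpower_pos.
  replace (Y1 / (b - a) * Fu - th * Gm / (R1 * (b - a)) * (/ Gm * Lv)) with
    (th / (R1 * (b - a)) * (Fu * (Rpower (m * y) th / th) - Lv)) by (rewrite E1; field; repeat split; lra).
  rewrite Rabs_mult, Rabs_pos_eq by (apply Rdiv_le_0_compat; [lra|apply Rmult_lt_0_compat; lra]).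
  eapply Rle_trans; [apply Rmult_le_compat_l; [apply Rdiv_le_0_compat; [lra|apply Rmult_lt_0_compat; lra]|exact H]|].
  right. rewrite ED.
  replace (C * Rpower (m * y) (- al) / (al + 1) * Rpower (m * y) (al + 1 + th))
    with (C / (al + 1) * (Rpower (m * y) (- al) * Rpower (m * y) (al + 1 + th))) by (field; lra).
  rewrite E3, E2, E4, EA, EC, E5, EK.
  rewrite EK in HK.
  field. repeat split; try lra.
  assert (0 <= al * m) by (apply Rmult_le_pos; lra). lra.
Qed.

Lemma rp_div u v al : 0 < u -> 0 < v -> Rpower (u / v) al = Rpower u al * Rpower v (- al).
Proof.
  intros Hu Hv. unfold Rdiv. rewrite <- Rpower_mult_distr by (try apply Rinv_0_lt_compat; auto).
  f_equal. unfold Rpower. rewrite ln_Rinv by auto. f_equal. ring.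
Qed.

Theorem mainTheorem8 (I : R -> Prop) (f f' : R -> R) (m alpha a b q M x th : R) :
  nonneg_interval I ->
  (forall u, interior I u -> derivable_pt_lim f u (f' u)) ->
  0 < m <= 1 -> 0 <= alpha <= 1 -> a < b ->
  interior I (m * a) -> interior I b ->
  alpha_m_convex alpha m (m * a) b (fun u => rpow (Rabs (f' u)) q) ->
  1 <= q ->
  (forall u, m * a <= u <= b -> Rabs (f' u) <= M) ->
  a <= x <= b -> 0 < th ->
  Rabs ((rpow (x - a) th + rpow (b - x) th) / (b - a) * f (m * x)
        - Gamma (th + 1) / (rpow m th * (b - a))
          * (J_left th m a x f + J_right th m x b f))
  <= m * M / (th + 1) * rpow ((alpha * m + th + 1) / (alpha + th + 1)) (1 / q)
     * ((rpow (x - a) (th + 1) + rpow (b - x) (th + 1)) / (b - a)).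
Proof.
  intros HI Hder Hm Hal Hab Hma Hb Hconv Hq HM Hx Hth.
  assert (Ima : I (m * a)).
  { destruct Hma as [d Hd]. apply Hd. unfold disc. rewrite Rminus_diag, Rabs_R0. apply cond_pos. }
  assert (a0 : 0 <= a).
  { pose proof (proj2 HI _ Ima). destruct (Rle_or_lt 0 a); auto.
    assert (m * a < 0) by (apply Rmult_pos_neg; lra). lra. }
  assert (Hmab : m * a <= a) by (rewrite <- (Rmult_1_l a) at 2; apply Rmult_le_compat_r; lra).
  assert (Hmxx : m * x <= x) by (rewrite <- (Rmult_1_l x) at 2; apply Rmult_le_compat_r; lra).
  assert (Hmbb : m * b <= b) by (rewrite <- (Rmult_1_l b) at 2; apply Rmult_le_compat_r; lra).
  assert (Hmax : m * a <= m * x) by (apply Rmult_le_compat_l; lra).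
  assert (Hmxb : m * x <= m * b) by (apply Rmult_le_compat_l; lra).
  assert (Hd : forall r, m * a <= r <= b -> derivable_pt_lim f r (f' r)).
  { intros r Hr. apply Hder. apply (interior_mid I (m * a) b); auto. }
  assert (Hfc : forall r, m * a <= r <= b -> continuity_pt f r).
  { intros r Hr. eapply dpl_cont; apply Hd; auto. }
  assert (HM0 : 0 <= M) by (pose proof (HM (m * a) ltac:(lra)); pose proof (Rabs_pos (f' (m * a))); lra).
  set (K := (alpha * m + th + 1) / (alpha + th + 1)).
  assert (HK : 0 < K).
  { unfold K. apply Rdiv_lt_0_compat; [|lra]. assert (0 <= alpha * m) by (apply Rmult_le_pos; lra). lra. }
  set (A := M * (Rpower K (1/q) * (1 - 1/q) + 1/q * Rpower K (1/q - 1) * m)).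
  set (C := M * (1/q * Rpower K (1/q - 1) * (1 - m))).
  assert (Hq1 : 0 <= 1 / q <= 1).
  { split; [apply Rdiv_le_0_compat; lra|]. unfold Rdiv. rewrite Rmult_1_l.
    rewrite <- Rinv_1. apply Rinv_le_contravar; lra. }
  assert (HA : 0 <= A).
  { unfold A. apply Rmult_le_pos; auto. pose proof (Rpower_pos K (1/q)). pose proof (Rpower_pos K (1/q - 1)).
    assert (0 <= Rpower K (1 / q) * (1 - 1 / q)) by (apply Rmult_le_pos; lra).
    assert (0 <= 1 / q * Rpower K (1 / q - 1) * m) by (apply Rmult_le_pos; [apply Rmult_le_pos|]; lra). lra. }
  assert (HC : 0 <= C).
  { unfold C. apply Rmult_le_pos; auto. pose proof (Rpower_pos K (1/q - 1)).
    apply Rmult_le_pos; [apply Rmult_le_pos|]; lra. }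
  assert (Hbd : forall X Y t r, m * a <= X <= b -> m * a <= Y <= b -> 0 < t <= 1 ->
            r = t * X + m * (1 - t) * Y -> m * a <= r <= b -> Rabs (f' r) <= A + C * Rpower t alpha).
  { intros X Y t r HX HY Ht Er Hr.
    pose proof (Hconv X Y t HX HY ltac:(lra) ltac:(rewrite <- Er; lra)) as Hc. simpl in Hc.
    rewrite <- Er in Hc.
    pose proof (rpow_unit t alpha ltac:(lra) Hal) as Hta.
    assert (GX : rpow (Rabs (f' X)) q <= rpow M q) by (apply rpow_mono; [lra|split; [apply Rabs_pos|apply HM; lra]]).
    assert (GY : rpow (Rabs (f' Y)) q <= rpow M q) by (apply rpow_mono; [lra|split; [apply Rabs_pos|apply HM; lra]]).
    assert (rpow (Rabs (f' r)) q <= rpow M q * (rpow t alpha + m * (1 - rpow t alpha))).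
    { eapply Rle_trans; [exact Hc|].
      assert (rpow t alpha * rpow (Rabs (f' X)) q <= rpow t alpha * rpow M q) by (apply Rmult_le_compat_l; lra).
      assert (m * (1 - rpow t alpha) * rpow (Rabs (f' Y)) q <= m * (1 - rpow t alpha) * rpow M q)
        by (apply Rmult_le_compat_l; [apply Rmult_le_pos|]; lra).
      lra. }
    rewrite <- (rpow_pos_eq t alpha) by lra.
    apply ptw; [apply Rabs_pos|exact HM0|exact Hq|exact Hm|exact Hta|exact HK|assumption]. }
  destruct (Gamma_val th Hth) as [HG0 HG1].
  assert (BL : Rabs (rpow (x - a) th / (b - a) * f (m * x) - Gamma (th + 1) / (rpow m th * (b - a)) * J_left th m a x f)
     <= m * M / (th + 1) * rpow K (1 / q) * (rpow (x - a) (th + 1) / (b - a))).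
  { destruct (Req_dec x a) as [Exa|Exa].
    { rewrite Exa, Rminus_diag. rewrite !rpow_zero by lra.
      unfold J_left. destruct (Rle_dec (m * a) (m * a)) as [_|n]; [|lra].
      replace (0 / (b - a) * f (m * a) - Gamma (th + 1) / (rpow m th * (b - a)) * 0) with 0 by (unfold Rdiv; ring).
      rewrite Rabs_R0. unfold Rdiv. rewrite Rmult_0_l, Rmult_0_r. lra. }
    assert (Hxa : a < x) by lra.
    set (y := x - a). assert (Hy : 0 < y) by (unfold y; lra).
    set (D := C * Rpower (m * y) (- alpha) / (alpha + 1)).
    assert (HD : 0 <= D).
    { unfold D. apply Rdiv_le_0_compat; [apply Rmult_le_pos; [auto|left; apply Rpower_pos]|lra]. }
    assert (Hmy : m * x - m * a = m * y) by (unfold y; ring).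
    destruct (core f (m * a) (m * x) th A D (alpha + 1)) as [Lv [Himp Hval]]; auto; try lra.
    { assert (0 < m * y) by (apply Rmult_lt_0_compat; lra). lra. }
    { intros s Hs. apply Hfc; lra. }
    { intros s Hs.
      eapply Rle_trans.
      { apply (cmp f f' (fun r => A * r + D * Rpower (r - m * a) (alpha + 1))
                       (fun r => A + D * ((alpha + 1) * Rpower (r - m * a) (alpha + 1 - 1))) s (m * x)); [lra| | |].
        - intros r Hr. apply Hd; lra.
        - intros r Hr. apply dplus; [|apply dRp; lra].
          eapply dpl_ext; [apply (derivable_pt_lim_scal (fun r => r)), derivable_pt_lim_id|ring].
        - intros r Hr.
          assert (Hmy0 : 0 < m * y) by (apply Rmult_lt_0_compat; lra).
          eapply Rle_trans.
          { apply (Hbd (m * x) a ((r - m * a) / (m * y)) r); try lra.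
            - split; [apply Rdiv_lt_0_compat; lra|]. apply (Rmult_le_reg_r (m * y)); auto.
              unfold Rdiv. rewrite Rmult_assoc, Rinv_l, Rmult_1_r, Rmult_1_l by lra. lra.
            - unfold y. field. lra. }
          right. f_equal. replace (alpha + 1 - 1) with alpha by ring.
          rewrite rp_div by lra. unfold D. field. lra. }
      right. ring. }
    rewrite Hmy in Hval.
    assert (EJ : J_left th m a x f = / Gamma th * Lv).
    { unfold J_left. destruct (Rle_dec (m * x) (m * a)) as [h|h].
      - exfalso. assert (m * a < m * x) by (apply Rmult_lt_compat_l; lra). lra.
      - f_equal. apply improper_unique; auto. assert (m * a < m * x) by (apply Rmult_lt_compat_l; lra). lra. }
    rewrite EJ, HG1. fold y.
    rewrite !rpow_pos_eq by lra.
    apply (alg_side y m th a b (f (m * x)) Lv alpha M K q (Gamma th) A C D); auto; try lra. }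
  assert (BR : Rabs (rpow (b - x) th / (b - a) * f (m * x) - Gamma (th + 1) / (rpow m th * (b - a)) * J_right th m x b f)
     <= m * M / (th + 1) * rpow K (1 / q) * (rpow (b - x) (th + 1) / (b - a))).
  { destruct (Req_dec x b) as [Exb|Exb].
    { rewrite Exb, Rminus_diag. rewrite !rpow_zero by lra.
      unfold J_right. destruct (Rle_dec (m * b) (m * b)) as [_|n]; [|lra].
      replace (0 / (b - a) * f (m * b) - Gamma (th + 1) / (rpow m th * (b - a)) * 0) with 0 by (unfold Rdiv; ring).
      rewrite Rabs_R0. unfold Rdiv. rewrite Rmult_0_l, Rmult_0_r. lra. }
    assert (Hxb : x < b) by lra.
    set (y := b - x). assert (Hy : 0 < y) by (unfold y; lra).
    set (D := C * Rpower (m * y) (- alpha) / (alpha + 1)).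
    assert (HD : 0 <= D).
    { unfold D. apply Rdiv_le_0_compat; [apply Rmult_le_pos; [auto|left; apply Rpower_pos]|lra]. }
    assert (Hmy : - (m * x) - - (m * b) = m * y) by (unfold y; ring).
    assert (Hmy0 : 0 < m * y) by (apply Rmult_lt_0_compat; lra).
    destruct (core (fun z => f (- z)) (- (m * b)) (- (m * x)) th A D (alpha + 1)) as [Lv [Himp Hval]]; auto; try lra.
    { intros s Hs. apply (continuity_pt_comp Ropp f s); [apply continuity_pt_opp, continuity_pt_id|apply Hfc; lra]. }
    { intros s Hs. rewrite Ropp_involutive.
      replace (- (m * x) - s) with (- s - m * x) by ring.
      replace (- (m * x) - - (m * b)) with (m * b - m * x) by ring.
      replace (s - - (m * b)) with (m * b - - s) by ring.
      rewrite Rabs_minus_sym.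
      eapply Rle_trans.
      { apply (cmp f f' (fun r => A * r - D * Rpower (m * b - r) (alpha + 1))
                       (fun r => A + D * ((alpha + 1) * Rpower (m * b - r) (alpha + 1 - 1))) (m * x) (- s)); [lra| | |].
        - intros r Hr. apply Hd; lra.
        - intros r Hr. eapply dpl_ext.
          { apply dminus; [apply (derivable_pt_lim_scal (fun r => r)), derivable_pt_lim_id|].
            apply (derivable_pt_lim_scal (fun r => Rpower (m * b - r) (alpha + 1))). apply rp_der_neg; lra. }
          ring.
        - intros r Hr.
          eapply Rle_trans.
          { apply (Hbd (m * x) b ((m * b - r) / (m * y)) r); try lra.
            - split; [apply Rdiv_lt_0_compat; lra|]. apply (Rmult_le_reg_r (m * y)); auto.
              unfold Rdiv. rewrite Rmult_assoc, Rinv_l, Rmult_1_r, Rmult_1_l by lra. unfold y; lra.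
            - unfold y. field. lra. }
          right. f_equal. replace (alpha + 1 - 1) with alpha by ring.
          rewrite rp_div by lra. unfold D. field. lra. }
      right. ring. }
    rewrite Hmy, Ropp_involutive in Hval.
    assert (EJ : J_right th m x b f = / Gamma th * Lv).
    { unfold J_right. destruct (Rle_dec (m * b) (m * x)) as [h|h].
      - exfalso. assert (m * x < m * b) by (apply Rmult_lt_compat_l; lra). lra.
      - f_equal. apply improper_unique.
        + apply Rmult_lt_compat_l; lra.
        + apply reflect_improper.
          replace (fun y0 => Rpower (m * b - - y0) (th - 1) * f (- y0))
            with (fun s => Rpower (s - - (m * b)) (th - 1) * f (- s)); auto.
          apply functional_extensionality. intro z. f_equal. f_equal. ring. }
    rewrite EJ, HG1. fold y.
    rewrite !rpow_pos_eq by lra.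
    apply (alg_side y m th a b (f (m * x)) Lv alpha M K q (Gamma th) A C D); auto; try lra. }
  replace ((rpow (x - a) th + rpow (b - x) th) / (b - a) * f (m * x)
        - Gamma (th + 1) / (rpow m th * (b - a)) * (J_left th m a x f + J_right th m x b f))
    with ((rpow (x - a) th / (b - a) * f (m * x) - Gamma (th + 1) / (rpow m th * (b - a)) * J_left th m a x f)
        + (rpow (b - x) th / (b - a) * f (m * x) - Gamma (th + 1) / (rpow m th * (b - a)) * J_right th m x b f))
    by (unfold Rdiv; ring).
  eapply Rle_trans; [apply Rabs_triang|].
  replace (m * M / (th + 1) * rpow K (1 / q) * ((rpow (x - a) (th + 1) + rpow (b - x) (th + 1)) / (b - a)))
    with (m * M / (th + 1) * rpow K (1 / q) * (rpow (x - a) (th + 1) / (b - a))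
        + m * M / (th + 1) * rpow K (1 / q) * (rpow (b - x) (th + 1) / (b - a))) by (unfold Rdiv; ring).
  lra.
Qed.
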